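(* Let $G=(V,E)$ be a finite undirected graph with independence number $\alpha(G)$, and for $v\in V$ let $N_{\le1}(v)$ be the set consisting of $v$ and its neighbors in $G$. Let $K\ge1$, $A=\{1,\dots,K\}$, and for each $v\in V$ let $\boldsymbol p(v)=(p(1,v),\dots,p(K,v))$ be a probability distribution on $A$. Define, for $i\in A$ and $v\in V$, $$q(i,v)=1-\prod_{v'\in N_{\le1}(v)}\bigl(1-p(i,v')\bigr).$$ Then for every $i\in A$ (with the convention that terms with $p(i,v)=0$ contribute $0$), $$\sum_{v\in V}\frac{p(i,v)}{q(i,v)}\le\frac{1}{1-e^{-1}}\Bigl(\alpha(G)+\sum_{v\in V}p(i,v)\Bigr).$$
   Context: The independence number $\alpha(G)$ is the maximum size of a set of vertices no two of which are joined by an edge. *)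

(* Defs.v *)
From mathcomp Require Import all_boot.
From Stdlib Require Import Reals.
Set Implicit Arguments. Unset Strict Implicit. Unset Printing Implicit Defensive.

(* A finite simple undirected graph: vertex type V : finType, edge relation
   e : rel V, assumed symmetric and irreflexive in the theorem. *)

Definition closed_nbhd (V : finType) (e : rel V) (v : V) : {set V} :=
  [set w | (w == v) || e v w].

Definition independent (V : finType) (e : rel V) (S : {set V}) : bool :=
  [forall x in S, forall y in S, ~~ e x y].

Definition alpha (V : finType) (e : rel V) : nat :=
  \max_(S : {set V} | independent e S) #|S|.

Definition Rsum (I : finType) (F : I -> R) : R := \big[Rplus/0%R]_(i : I) F i.

Definition qf (V : finType) (e : rel V) (K : nat) (p : 'I_K -> V -> R)
  (i : 'I_K) (v : V) : R :=
  (1 - \big[Rmult/1%R]_(w in closed_nbhd e v) (1 - p i w))%R.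

Definition ratio_term (V : finType) (e : rel V) (K : nat) (p : 'I_K -> V -> R)
  (i : 'I_K) (v : V) : R :=
  if Req_EM_T (p i v) 0%R then 0%R else (p i v / qf e p i v)%R.

(* Main.v *)
From Stdlib Require Import Reals Lra Psatz Classical.
Require Import Defs.
From mathcomp Require Import all_boot.
From Stdlib Require Import Reals.
From HB Require Import structures.

Local Open Scope R_scope.

Lemma Rplus_assoc' : associative Rplus. Proof. by move=> *; rewrite Rplus_assoc. Qed.
Lemma Rmult_assoc' : associative Rmult. Proof. by move=> *; rewrite Rmult_assoc. Qed.
HB.instance Definition _ := Monoid.isComLaw.Build R 0%R Rplus Rplus_assoc' Rplus_comm Rplus_0_l.
HB.instance Definition _ := Monoid.isComLaw.Build R 1%R Rmult Rmult_assoc' Rmult_comm Rmult_1_l.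

Lemma Rsum_le (I : Type) (r : seq I) (P : pred I) (F G : I -> R) :
  (forall i, P i -> F i <= G i) ->
  \big[Rplus/0]_(i <- r | P i) F i <= \big[Rplus/0]_(i <- r | P i) G i.
Proof.
move=> H; apply: (big_ind2 (fun x y => x <= y)) => //; first lra.
move=> *; lra.
Qed.

Lemma Rsum_ge0 (I : Type) (r : seq I) (P : pred I) (F : I -> R) :
  (forall i, P i -> 0 <= F i) -> 0 <= \big[Rplus/0]_(i <- r | P i) F i.
Proof.
move=> H; apply: (big_ind (fun x => 0 <= x)) => //; first lra.
move=> *; lra.
Qed.

Lemma Rsum_mulr (I : Type) (r : seq I) (P : pred I) (F : I -> R) c :
  \big[Rplus/0]_(i <- r | P i) (F i * c) = (\big[Rplus/0]_(i <- r | P i) F i) * c.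
Proof.
apply: (big_ind2 (fun x y => x = y * c)) => //; first lra.
by move=> x1 x2 y1 y2 -> ->; lra.
Qed.

Lemma Rprod_le (I : Type) (r : seq I) (P : pred I) (F G : I -> R) :
  (forall i, P i -> 0 <= F i <= G i) ->
  0 <= \big[Rmult/1]_(i <- r | P i) F i <= \big[Rmult/1]_(i <- r | P i) G i.
Proof.
move=> H; apply: (big_ind2 (fun x y => 0 <= x <= y)) => //; first lra.
move=> x1 x2 y1 y2 [h1 h2] [h3 h4]; split; first nra.
apply: Rmult_le_compat => //.
Qed.

Lemma Rsum_subset (T : finType) (A B : {set T}) (F : T -> R) :
  A \subset B -> (forall i, 0 <= F i) ->
  \big[Rplus/0]_(i in A) F i <= \big[Rplus/0]_(i in B) F i.
Proof.
move=> sAB H; rewrite [X in _ <= X](big_setID A) /= (setIidPr sAB).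
have := @Rsum_ge0 T (index_enum T) [pred i in B :\: A] F (fun i _ => H i).
move=> h; apply: Rle_trans (Rplus_le_compat_l _ _ _ h); rewrite Rplus_0_r; exact: Rle_refl.
Qed.

Lemma exp_convex s : 0 <= s <= 1 -> exp (- s) <= 1 - s + s * exp (-1).
Proof.
move=> Hs.
have A : exp (- s) * (1 + s) <= 1.
  have h := exp_ineq1_le s.
  have e1 : exp (-s) * exp s = 1 by rewrite -exp_plus Rplus_opp_l exp_0.
  have := exp_pos (- s); nra.
have B : s * exp (- s) <= exp (-1).
  have h := exp_ineq1_le (-1 + s).
  have e1 : exp (-1) = exp (-1 + s) * exp (- s) by rewrite -exp_plus; f_equal; lra.
  have := exp_pos (- s); nra.
have := exp_pos (- s); nra.
Qed.

Lemma key_bound (pv s q : R) : 0 < pv -> pv <= s -> 1 - exp (- s) <= q ->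
  pv / q <= / (1 - exp (-1)) * (pv / s + pv).
Proof.
move=> hp hps hq.
have he1 : exp (-1) < 1 by rewrite -exp_0; apply: exp_increasing; lra.
have hc : 0 < 1 - exp (-1) by lra.
have hs : 0 < s by lra.
have [hs1|hs1] := Rle_lt_dec s 1.
- have h1 : s * (1 - exp (-1)) <= q by have := exp_convex s; lra.
  have hq0 : 0 < q by nra.
  apply: (Rle_trans _ (pv / (s * (1 - exp (-1))))).
    apply: Rmult_le_compat_l; first lra.
    apply: Rinv_le_contravar => //; nra.
  rewrite /Rdiv Rinv_mult.
  have := Rinv_0_lt_compat _ hs; have := Rinv_0_lt_compat _ hc; nra.
- have h1 : exp (- s) < exp (-1) by apply: exp_increasing; lra.
  have hq0 : 1 - exp (-1) <= q by lra.
  apply: (Rle_trans _ (pv / (1 - exp (-1)))).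
    apply: Rmult_le_compat_l; first lra.
    apply: Rinv_le_contravar => //.
  rewrite /Rdiv.
  have ha := Rinv_0_lt_compat _ hs; have hb := Rinv_0_lt_compat _ hc; set a := / s in ha *; set b := / (1 - exp (-1)) in hb *; rewrite Rmult_plus_distr_l; have : 0 <= b * (pv * a) by apply: Rmult_le_pos; [lra | apply: Rmult_le_pos; lra]. lra.
Qed.

Lemma exists_min (T : eqType) (s : seq T) (Q : T -> Prop) (f : T -> R) :
  (exists x, x \in s /\ Q x) ->
  exists x, [/\ x \in s, Q x & forall y, y \in s -> Q y -> f x <= f y].
Proof.
elim: s => [|a s IH] [x [xs Qx]]; first by rewrite in_nil in xs.
case: (classic (exists y, y \in s /\ Q y)) => [ex|nex].
- have [m [ms Qm Hm]] := IH ex.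
  case: (classic (Q a /\ f a <= f m)) => [[Qa le]|nle].
  + exists a; split => //; first by rewrite mem_head.
    move=> y; rewrite in_cons => /orP[/eqP-> _|ys Qy]; first lra.
    have := Hm y ys Qy; lra.
  + exists m; split => //; first by rewrite in_cons ms orbT.
    move=> y; rewrite in_cons => /orP[/eqP-> Qa|ys Qy]; last exact: Hm.
    have : ~ f a <= f m by move=> h; apply: nle.
    lra.
- have Qa : Q a.
    move: xs; rewrite in_cons => /orP[/eqP<- //|xs]; exfalso; apply: nex; by exists x.
  exists a; split => //; first by rewrite mem_head.
  move=> y; rewrite in_cons => /orP[/eqP-> _|ys Qy]; first lra.
  exfalso; apply: nex; by exists y.
Qed.

Section Greedy.
Variables (V : finType) (e : rel V) (e_sym : symmetric e) (e_irr : irreflexive e).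
Variable (P : V -> R).
Hypothesis P_ge0 : forall v, 0 <= P v.

Definition sU (U : {set V}) v := \big[Rplus/0]_(w in U :&: closed_nbhd e v) P w.
Definition tU (U : {set V}) v := if Req_EM_T (P v) 0 then 0 else P v / sU U v.

Lemma in_nbhd_self v : v \in closed_nbhd e v.
Proof. by rewrite inE eqxx. Qed.

Lemma sU_ge_p (U : {set V}) v : v \in U -> P v <= sU U v.
Proof.
move=> vU; have := @Rsum_subset V [set v] (U :&: closed_nbhd e v) P.
rewrite big_set1; apply => //.
by rewrite sub1set inE vU in_nbhd_self.
Qed.

Lemma sU_mono (U U' : {set V}) v : U' \subset U -> sU U' v <= sU U v.
Proof. by move=> sub; apply: Rsum_subset => //; apply: setSI. Qed.

Lemma indep0 : independent e set0.
Proof. by apply/forallP => x; rewrite inE. Qed.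

Lemma greedy (n : nat) : forall U : {set V}, (#|U| <= n)%nat ->
  exists S : {set V}, [/\ S \subset U, independent e S &
    \big[Rplus/0]_(v in U) tU U v <= INR #|S|].
Proof.
elim: n => [|n IH] U hU.
  have U0 : U = set0 by apply/eqP; rewrite -cards_eq0 -leqn0.
  subst U; exists set0; split; [exact: sub0set | exact: indep0 |].
  rewrite big_set0 cards0 /=; lra.
case: (classic (exists v, v \in enum U /\ P v <> 0)) => [ex|nex].
- have [u [uU Pu Hu]] := @exists_min _ _ _ (sU U) ex.
  rewrite mem_enum in uU.
  have hU' : (#|U :\: closed_nbhd e u| <= n)%nat.
    have k0 : (0 < #|U :&: closed_nbhd e u|)%nat.
      by apply/card_gt0P; exists u; rewrite inE uU in_nbhd_self.
    rewrite cardsD leq_subLR; apply: leq_trans hU _.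
    by rewrite -add1n leq_add2r.
  have [S' [sub' ind' sum']] := IH _ hU'.
  have notN : forall y, y \in S' -> ~~ e u y.
    move=> y yS; have := subsetP sub' y yS.
    by rewrite inE /closed_nbhd inE negb_or => /andP[/andP[_ ->]].
  exists (u |: S'); split.
  + rewrite subUset sub1set uU; apply: subset_trans sub' _; exact: subsetDl.
  + apply/forallP => x; apply/implyP => xS; apply/forallP => y; apply/implyP => yS.
    move: xS yS; rewrite !in_setU1 => /orP[/eqP->|xS] /orP[/eqP->|yS].
    * by rewrite e_irr.
    * exact: notN.
    * by rewrite e_sym; apply: notN.
    * by move/forallP: ind' => /(_ x) /implyP /(_ xS) /forallP /(_ y) /implyP /(_ yS).
  + have uS' : u \notin S'.
      apply/negP => /(subsetP sub'); by rewrite inE in_nbhd_self.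
    rewrite cardsU1 uS' add1n S_INR (big_setID (closed_nbhd e u)) /=.
    have hsu : 0 < sU U u.
      have := sU_ge_p _ _ uU; have := P_ge0 u; lra.
    have A : \big[Rplus/0]_(v in U :&: closed_nbhd e u) tU U v <= 1.
      apply: Rle_trans (@Rsum_le _ _ _ _ (fun v => P v * / sU U u) _) _.
        move=> v; rewrite inE => /andP[vU vN]; rewrite /tU.
        destruct (Req_EM_T (P v) 0) as [h0|Pv].
          apply: Rmult_le_pos => //; apply: Rlt_le; exact: Rinv_0_lt_compat.
        apply: Rmult_le_compat_l => //; apply: Rinv_le_contravar => //.
        by apply: Hu => //; rewrite mem_enum.
      rewrite Rsum_mulr -/(sU U u) Rinv_r; lra.
    have B : \big[Rplus/0]_(v in U :\: closed_nbhd e u) tU U v <=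
             \big[Rplus/0]_(v in U :\: closed_nbhd e u) tU (U :\: closed_nbhd e u) v.
      apply: Rsum_le => v vU'. rewrite /tU. destruct (Req_EM_T (P v) 0) as [h0|Pv]; rewrite /=; first lra.
      apply: Rmult_le_compat_l => //; apply: Rinv_le_contravar.
        have := sU_ge_p _ _ vU'; have := P_ge0 v; lra.
      apply: sU_mono; exact: subsetDl.
    have := Rplus_le_compat _ _ _ _ A (Rle_trans _ _ _ B sum'); lra.
- exists set0; split; [exact: sub0set | exact: indep0 |].
  rewrite big1 ?cards0 /= => [|v vU]; first lra.
  rewrite /tU; destruct (Req_EM_T (P v) 0) as [h|h] => //; exfalso; apply: nex; exists v.
  by rewrite mem_enum.
Qed.

End Greedy.

Local Close Scope R_scope.
Theorem lemma3 (V : finType) (e : rel V)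
  (e_sym : symmetric e) (e_irr : irreflexive e)
  (K : nat) (HK : (0 < K)%N) (p : 'I_K -> V -> R)
  (p_nonneg : forall (i : 'I_K) (v : V), (0 <= p i v)%R)
  (p_sum1 : forall v : V, Rsum (fun i : 'I_K => p i v) = 1%R) :
  forall i : 'I_K,
    (Rsum (fun v : V => ratio_term e p i v)
     <= / (1 - exp (-1)) * (INR (alpha e) + Rsum (fun v : V => p i v)))%R.
Proof.
Local Open Scope R_scope.
move=> i.
set P := fun v => p i v.
have P_ge0 : forall v, 0 <= P v by move=> v; exact: p_nonneg.
have P_le1 : forall v, P v <= 1.
  move=> v; have := p_sum1 v; rewrite /Rsum (bigD1 i) //= => h.
  have : 0 <= \big[Rplus/0]_(i0 < K | i0 != i) p i0 v.
    by apply: Rsum_ge0 => j _; exact: p_nonneg.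
  have h' : p i v + \big[Rplus/0]_(i0 < K | i0 != i) p i0 v = 1 := h.
  rewrite /P; lra.
have he1 : exp (-1) < 1 by rewrite -exp_0; apply: exp_increasing; lra.
have hc : 0 < / (1 - exp (-1)) by apply: Rinv_0_lt_compat; lra.
have [S [_ indS sumS]] := @greedy V e e_sym e_irr P P_ge0 _ setT (leqnn _).
have Salpha : INR #|S| <= INR (alpha e).
  apply: le_INR; apply/leP; rewrite /alpha; apply: leq_bigmax_cond; exact: indS.
have pt : forall v, ratio_term e p i v <=
    / (1 - exp (-1)) * (tU V e P setT v + P v).
  move=> v; rewrite /ratio_term /tU /P /=.
  destruct (Req_EM_T (p i v) 0) as [h0|Pv]; rewrite /=.
    have := p_nonneg i v; nra.
  apply: key_bound.
  - have := P_ge0 v; rewrite /P; lra.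
  - exact: (sU_ge_p V e (fun x => p i x) P_ge0 _ _ (in_setT v)).
  - rewrite /qf /sU setTI.
    have m : exp (- \big[Rplus/0]_(w in closed_nbhd e v) P w) =
             \big[Rmult/1]_(w in closed_nbhd e v) exp (- P w).
      apply: (big_morph (fun x => exp (- x))).
        by move=> x y; rewrite Ropp_plus_distr exp_plus.
      by rewrite Ropp_0 exp_0.
    rewrite m.
    have ge01 : forall w, 0 <= 1 - p i w by move=> w; have := P_le1 w; rewrite /P; lra.
    have [_ h] := @Rprod_le _ (index_enum V) (fun w => w \in closed_nbhd e v)
      (fun w => 1 - p i w) (fun w => exp (- P w))
      (fun w _ => conj (ge01 w) (exp_ineq1_le (- P w))).
    have h' : \big[Rmult/1]_(w in closed_nbhd e v) (1 - p i w) <=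
              \big[Rmult/1]_(w in closed_nbhd e v) exp (- P w) by [].
    lra.
rewrite /Rsum.
apply: (Rle_trans _ (\big[Rplus/0]_(v : V) (/ (1 - exp (-1)) * (tU V e P setT v + P v)))).
  by apply: Rsum_le => v _; exact: pt.
have e1 : \big[Rplus/0]_(v : V) (/ (1 - exp (-1)) * (tU V e P setT v + P v)) =
   (\big[Rplus/0]_(v : V) (tU V e P setT v) + \big[Rplus/0]_(v : V) P v) * / (1 - exp (-1)).
  rewrite -big_split -Rsum_mulr /=; apply: eq_bigr => v _; lra.
have e2 : \big[Rplus/0]_(v : V) (tU V e P setT v) = \big[Rplus/0]_(v in [set: V]) tU V e P setT v.
  by apply: eq_bigl => v; rewrite in_setT.
rewrite e1 e2 Rmult_comm.
apply: Rmult_le_compat_l; first lra.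
have : \big[Rplus/0]_(v : V) P v = \big[Rplus/0]_(v : V) p i v by [].
lra.
Qed.
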